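(* A family of structures $\mathfrak{K}$ is $\mathbf{nUs}$-learnable if and only if it is $\mathbf{Dec}$-learnable.
   Context: All structures are countable, have domain $\mathbb{N}$, are in a finite relational signature, and are identified with their atomic diagrams. A family of structures $\mathfrak{K}$ is a countable set of pairwise nonisomorphic such structures. $\mathcal{S}\restriction_s$ is the finite substructure of $\mathcal{S}$ on $\{0,\dots,s\}$. $\mathrm{LD}(\mathfrak{K})$ is the set of structures with domain $\mathbb{N}$ isomorphic to a member of $\mathfrak{K}$. The hypothesis space is $\{\ulcorner\mathcal{A}\urcorner:\mathcal{A}\in\mathfrak{K}\}\cup\{?\}$ (distinct formal symbols); a learner is an arbitrary function $\mathbf{M}$ from $\{\mathcal{S}\restriction_s:\mathcal{S}\in\mathrm{LD}(\mathfrak{K}),s\in\mathbb{N}\}$ to the hypothesis space. $\mathbf{M}$ $\mathbf{Ex}$-learns $\mathfrak{K}$ if for every $\mathcal{S}\in\mathrm{LD}(\mathfrak{K})$, $\mathbf{M}(\mathcal{S}\restriction_n)$ is eventually constantly $\ulcorner\mathcal{A}\urcorner$ where $\mathcal{A}\in\mathfrak{K}$, $\mathcal{A}\cong\mathcal{S}$. $\mathbf{M}$ $\mathbf{nUs}$-learns $\mathfrak{K}$ if it $\mathbf{Ex}$-learns $\mathfrak{K}$ and for every $\mathcal{S}\in\mathrm{LD}(\mathfrak{K})$ with $\mathcal{S}\cong\mathcal{A}\in\mathfrak{K}$, if $n_0$ is least with $\mathbf{M}(\mathcal{S}\restriction_{n_0})=\ulcorner\mathcal{A}\urcorner$ then $\mathbf{M}(\mathcal{S}\restriction_m)=\ulcorner\mathcal{A}\urcorner$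 for all $m>n_0$. $\mathbf{M}$ $\mathbf{Dec}$-learns $\mathfrak{K}$ if it $\mathbf{Ex}$-learns $\mathfrak{K}$ and for every $\mathcal{S}\in\mathrm{LD}(\mathfrak{K})$, every $\mathcal{A}\in\mathfrak{K}$ and every $n$: if $\mathbf{M}(\mathcal{S}\restriction_n)=\ulcorner\mathcal{A}\urcorner\neq\mathbf{M}(\mathcal{S}\restriction_{n+1})$ then $\mathbf{M}(\mathcal{S}\restriction_m)\neq\ulcorner\mathcal{A}\urcorner$ for all $m>n$. A family is $\mathbf{nUs}$-/$\mathbf{Dec}$-learnable if some learner $\mathbf{nUs}$-/$\mathbf{Dec}$-learns it. *)

(* Defs.v *)
From mathcomp Require Import all_boot.
Set Implicit Arguments. Unset Strict Implicit. Unset Printing Implicit Defensive.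

(* A finite relational signature: the list of arities of its relation symbols. *)
Definition signature := seq nat.

(* A structure with domain nat, identified with its atomic diagram:
   for each relation symbol i (of arity nth 0 sg i), its characteristic function. *)
Definition structure (sg : signature) :=
  forall i : 'I_(size sg), (nth 0 sg i).-tuple nat -> bool.

Definition iso (sg : signature) (A B : structure sg) : Prop :=
  exists f g : nat -> nat,
    [/\ cancel f g, cancel g f &
        forall (i : 'I_(size sg)) (t : (nth 0 sg i).-tuple nat),
          B i (map_tuple f t) = A i t].

(* The finite substructure S|_s on {0,...,s}: the number s together with the
   diagram of S restricted to tuples from {0,...,s} (false elsewhere). *)
Definition restr (sg : signature) (S : structure sg) (s : nat)
  : nat * structure sg :=
  (s, fun (i : 'I_(size sg)) (t : (nth 0 sg i).-tuple nat) =>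
        all (fun x => x <= s) t && S i t).

(* A family of structures: indexed by a countable type I (the formal symbols
   of the hypothesis space), pairwise nonisomorphic. *)
Definition struct_family (sg : signature) (I : countType) (K : I -> structure sg) : Prop :=
  forall i j : I, iso (K i) (K j) -> i = j.

Definition LD (sg : signature) (I : countType) (K : I -> structure sg)
  (S : structure sg) : Prop := exists i, iso S (K i).

(* A learner: maps finite restrictions to hypotheses; Some i = the code of K i,
   None = '?'. *)
Definition learner (sg : signature) (I : countType) := nat * structure sg -> option I.

Definition Ex_learns (sg : signature) (I : countType) (K : I -> structure sg)
  (M : learner sg I) : Prop :=
  forall S, LD K S ->
    exists i, iso S (K i) /\
      exists n0, forall n, n0 <= n -> M (restr S n) = Some i.

Definition nUs_learns (sg : signature) (I : countType) (K : I -> structure sg)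
  (M : learner sg I) : Prop :=
  Ex_learns K M /\
  forall S i, LD K S -> iso S (K i) ->
    forall n0, M (restr S n0) = Some i ->
      (forall k, k < n0 -> M (restr S k) <> Some i) ->
      forall m, n0 < m -> M (restr S m) = Some i.

Definition Dec_learns (sg : signature) (I : countType) (K : I -> structure sg)
  (M : learner sg I) : Prop :=
  Ex_learns K M /\
  forall S, LD K S -> forall (j : I) (n : nat),
    M (restr S n) = Some j -> M (restr S n.+1) <> Some j ->
    forall m, n < m -> M (restr S m) <> Some j.

Definition nUs_learnable (sg : signature) (I : countType) (K : I -> structure sg) :=
  exists M : learner sg I, nUs_learns K M.

Definition Dec_learnable (sg : signature) (I : countType) (K : I -> structure sg) :=
  exists M : learner sg I, Dec_learns K M.

(* Main.v *)
From Stdlib Require Import FunctionalExtensionality.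
Require Import Defs.
From mathcomp Require Import all_boot.
Set Implicit Arguments. Unset Strict Implicit.

Lemma iso_sym (sg : signature) (A B : structure sg) : iso A B -> iso B A.
Proof.
case=> f [g [fK gK H]]; exists g, f; split=> // i t.
have E : map_tuple f (map_tuple g t) = t.
  by apply: val_inj => /=; rewrite -map_comp (eq_map (f := f \o g) (g := id)) ?map_id // => x /=; rewrite gK.
by rewrite -[in RHS]E H.
Qed.

Lemma iso_trans (sg : signature) (A B C : structure sg) : iso A B -> iso B C -> iso A C.
Proof.
case=> f [g [fK gK H]]; case=> f' [g' [fK' gK' H']].
exists (f' \o f), (g \o g'); split.
- exact: can_comp.
- exact: can_comp.
- move=> i t.
  have E : map_tuple (f' \o f) t = map_tuple f' (map_tuple f t).
    by apply: val_inj => /=; rewrite map_comp.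
  by rewrite E H' H.
Qed.

Lemma uniq_idx (sg : signature) (I : countType) (K : I -> structure sg) S i j :
  struct_family K -> iso S (K i) -> iso S (K j) -> i = j.
Proof. move=> F Hi Hj; apply: (F i j); exact: (iso_trans (iso_sym Hi) Hj). Qed.

Definition tr (sg : signature) (D : structure sg) (k : nat) : nat * structure sg :=
  (k, fun (i : 'I_(size sg)) (t : (nth 0 sg i).-tuple nat) =>
        all (fun x => x <= k) t && D i t).

Lemma tr_restr (sg : signature) (S : structure sg) n k :
  k <= n -> tr (restr S n).2 k = restr S k.
Proof.
move=> kn; rewrite /tr /restr /=; congr pair.
apply: functional_extensionality_dep => i.
apply: functional_extensionality_dep => t.
case A: (all _ t) => //=.
have -> : all (fun x => x <= n) t.
  by apply: sub_all A => x /= xk; exact: leq_trans xk kn.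
done.
Qed.

Definition decM (sg : signature) (I : countType) (M : learner sg I) : learner sg I :=
  fun p => match M p with
  | Some j => if has (fun k => (M (tr p.2 k) == Some j) && (M (tr p.2 k.+1) != Some j))
                    (iota 0 p.1) then None else Some j
  | None => None
  end.

Lemma decM_restr (sg : signature) (I : countType) (M : learner sg I) S n j :
  decM M (restr S n) = Some j <->
  M (restr S n) = Some j /\
  ~ (exists k, k < n /\ M (restr S k) = Some j /\ M (restr S k.+1) <> Some j).
Proof.
rewrite /decM.
have Hh : forall j', has (fun k => (M (tr (restr S n).2 k) == Some j') &&
                         (M (tr (restr S n).2 k.+1) != Some j')) (iota 0 (restr S n).1)
   <-> exists k, k < n /\ M (restr S k) = Some j' /\ M (restr S k.+1) <> Some j'.
  move=> j'; split.
  - case/hasP=> k; rewrite mem_iota add0n /= => kn /andP [/eqP E1 /eqP E2].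
    exists k; rewrite -(@tr_restr _ S n k) ?(ltnW kn) // -(@tr_restr _ S n k.+1) //.
  - case=> k [kn [E1 E2]]; apply/hasP; exists k; first by rewrite mem_iota.
    rewrite /= (@tr_restr _ S n k) ?(ltnW kn) // (@tr_restr _ S n k.+1) // E1 eqxx /=.
    by apply/eqP.
case E: (M (restr S n)) => [j'|]; last first.
  by split=> // [[]].
move: (Hh j'); case: has => Hj.
- split=> //; case=> [[Ej]]; subst j' => Hn; exfalso; apply: Hn; exact: (proj1 Hj isT).
- split; first by move=> [<-]; split=> // Hx; have := proj2 Hj Hx.
  by case=> [[<-]].
Qed.

Theorem mainTheorem10 (sg : signature) (I : countType) (K : I -> structure sg) :
  @struct_family sg I K -> (@nUs_learnable sg I K <-> @Dec_learnable sg I K).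
Proof.
move=> F; split.
- case=> M [Ex Nu]; exists (decM M); split.
  + move=> S LS; case: (Ex S LS) => i [Hi [n1 Hc]].
    exists i; split=> //; exists n1 => n Hn.
    apply/decM_restr; split; first exact: Hc.
    case=> k [_ [E1 E2]]; apply: E2.
    have ex : exists m, M (restr S m) == Some i by exists n1; rewrite Hc.
    set n0 := ex_minn ex.
    case: (ex_minnP ex) => n0' /eqP H0 Hmin.
    have Hlt : forall k', k' < n0' -> M (restr S k') <> Some i.
      move=> k' kl E; have := Hmin k'; rewrite E eqxx => /(_ isT); rewrite leqNgt kl //.
    have n0k : n0' <= k by apply: Hmin; rewrite E1.
    exact: (Nu S i LS Hi n0' H0 Hlt k.+1 (leq_ltn_trans n0k (ltnSn k))).
  + move=> S _ j n /decM_restr [E1 E2] E3 m nm /decM_restr [E4 E5]; apply: E5.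
    exists n; split=> //; split=> // E6; apply: E3; apply/decM_restr; split=> //.
    case=> k [kn [E7 E8]]; rewrite ltnS leq_eqVlt in kn.
    case/orP: kn => [/eqP ek|kn]; first by subst k.
    by apply: E2; exists k.
- case=> M [Ex De]; exists M; split=> // S i LS Hi n0 H0 _ m nm.
  case: (Ex S LS) => i' [Hi' [n1 Hc]].
  have ii : i' = i by exact: uniq_idx F Hi' Hi.
  subst i'.
  have D : forall d, M (restr S (n0 + d)) = Some i.
    elim=> [|d IH]; first by rewrite addn0.
    rewrite addnS; case: (M (restr S (n0 + d).+1) =P Some i) => [//|Hn]; exfalso.
    apply: (De S LS i (n0 + d) IH Hn (n1 + (n0 + d).+1)); first by rewrite addnS ltnS leq_addl.
    apply: Hc; exact: leq_addr.
  by rewrite -(subnKC (ltnW nm)); exact: D.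
Qed.
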